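(* Let $A,B\subseteq\mathbb{N}$ and $L\in\mathbb{R}$. The limit $\lim_{n\to\infty}\frac{B(n)-A(n)}{n}$ exists and equals $L$ if and only if $\mu(B)-\mu(A)=L$ for every density measure $\mu$.
   Context: $\mathbb{N}=\{1,2,3,\dots\}$. For $A\subseteq\mathbb{N}$ let $A(n)=|A\cap[1,n]|$. Let $\mathcal{D}$ be the collection of all $A\subseteq\mathbb{N}$ for which the asymptotic density $d(A)=\lim_{n\to\infty}\frac{A(n)}{n}$ exists. A density measure is a function $\mu:\mathcal{P}(\mathbb{N})\to[0,1]$ with $\mu(\mathbb{N})=1$, $\mu(A\cup B)=\mu(A)+\mu(B)$ for all disjoint $A,B\subseteq\mathbb{N}$, and $\mu(A)=d(A)$ for all $A\in\mathcal{D}$. *)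

(* Defs.v *)
From Stdlib Require Import Reals ClassicalEpsilon.
From Coquelicot Require Import Coquelicot.
Open Scope R_scope.

(* A subset of N = {1,2,3,...} is represented by a predicate on nat all of
   whose elements are positive. *)
Definition subsetN (A : nat -> Prop) : Prop := forall x, A x -> (0 < x)%nat.

Definition Nplus : nat -> Prop := fun x => (0 < x)%nat.

Fixpoint cnt (A : nat -> Prop) (n : nat) : R :=
  match n with
  | O => 0
  | S m => cnt A m + (if excluded_middle_informative (A (S m)) then 1 else 0)
  end.

Definition has_density (A : nat -> Prop) (l : R) : Prop :=
  is_lim_seq (fun n => cnt A n / INR n) l.

(* density measure on P(N) (values on predicates not contained in N are
   irrelevant and unconstrained) *)
Definition density_measure (mu : (nat -> Prop) -> R) : Prop :=
  (forall A, subsetN A -> 0 <= mu A <= 1) /\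
  mu Nplus = 1 /\
  (forall A B, subsetN A -> subsetN B -> (forall x, ~ (A x /\ B x)) ->
     mu (fun x => A x \/ B x) = mu A + mu B) /\
  (forall A l, subsetN A -> has_density A l -> mu A = l).

(* Main.v *)
Require Import Defs.
From Stdlib Require Import Reals.
From Coquelicot Require Import Coquelicot.

Module UF.
From mathcomp Require Import all_boot.
From mathcomp Require Import boolp classical_sets filter.
From Stdlib Require Import Arith Lia.

Lemma ultra_exists (K : nat -> Prop) :
  (forall N, exists n, (N <= n)%coq_nat /\ K n) ->
  exists U : (nat -> Prop) -> Prop,
   U K /\ (forall N, U (fun n => (N <= n)%coq_nat)) /\
   (forall P Q, U P -> U Q -> U (fun n => P n /\ Q n)) /\
   (forall P Q : nat -> Prop, (forall n, P n -> Q n) -> U P -> U Q) /\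
   ~ U (fun _ => False) /\ (forall P, U P \/ U (fun n => ~ P n)).
Proof.
move=> HK.
pose F := fun P : nat -> Prop => exists N, forall n, (N <= n)%coq_nat -> K n -> P n.
have FF : Filter F.
  split.
  - by exists 0%N.
  - move=> P Q [N1 H1] [N2 H2]; exists (Nat.max N1 N2) => n Hn Kn; split.
      by apply: H1 => //; lia.
    by apply: H2 => //; lia.
  - by move=> P Q PQ [N H]; exists N => n Hn Kn; apply: PQ; apply: H.
have PF : ProperFilter F.
  apply: Build_ProperFilter_ex => P [N H].
  by have [n [Hn Kn]] := HK N; exists n; apply: H.
have [G [UG FG]] := ultraFilterLemma PF.
exists G; split; [|split; [|split; [|split; [|split]]]].
- by apply: FG; exists 0%N.
- by move=> N; apply: FG; exists N.
- by move=> P Q GP GQ; apply: (@filterI _ G) .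
- by move=> P Q PQ GP; apply: (@filterS _ G _ P Q).
- exact: (@filter_not_empty _ G _).
- by move=> P; apply: in_ultra_setVsetC.
Qed.
End UF.

From Stdlib Require Import Lra Lia Classical ClassicalEpsilon FunctionalExtensionality PropExtensionality.
Open Scope R_scope.

Definition ind (P : nat -> Prop) (x : nat) : R :=
  if excluded_middle_informative (P x) then 1 else 0.

Fixpoint ssum (g : nat -> R) (n : nat) : R :=
  match n with O => 0 | S m => ssum g m + g (S m) end.

Lemma cnt_ssum P n : cnt P n = ssum (ind P) n.
Proof. induction n; simpl; [reflexivity|]. rewrite IHn. reflexivity. Qed.

Lemma ssum_ext f g n : (forall x, (0 < x)%nat -> f x = g x) -> ssum f n = ssum g n.
Proof. intro H. induction n; simpl; [reflexivity|]. rewrite IHn, H by lia. reflexivity. Qed.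

Lemma ssum_plus f g n : ssum (fun x => f x + g x) n = ssum f n + ssum g n.
Proof. induction n; simpl; [lra|]. rewrite IHn. lra. Qed.

Lemma ssum_bound f n : (forall x, 0 <= f x <= 1) -> 0 <= ssum f n <= INR n.
Proof. intro H. induction n; simpl ssum; [simpl; lra|]. rewrite S_INR. specialize (H (S n)). lra. Qed.

Lemma ind01 P x : 0 <= ind P x <= 1.
Proof. unfold ind. destruct excluded_middle_informative; lra. Qed.

Lemma cnt_bound P n : 0 <= cnt P n <= INR n.
Proof. rewrite cnt_ssum. apply ssum_bound. apply ind01. Qed.

Lemma cnt_Nplus n : cnt Nplus n = INR n.
Proof.
  induction n; simpl cnt; [reflexivity|]. rewrite IHn, S_INR.
  destruct excluded_middle_informative as [_|h]; [lra|]. exfalso; apply h; unfold Nplus; lia.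
Qed.

Lemma cnt_add P Q R1 n :
  (forall x, (0 < x)%nat -> ind R1 x = ind P x + ind Q x) ->
  cnt R1 n = cnt P n + cnt Q n.
Proof.
  intro H. rewrite !cnt_ssum, <- ssum_plus. apply ssum_ext. exact H.
Qed.

Ltac indtac := unfold ind; repeat destruct excluded_middle_informative; try lra; tauto.

Lemma par_contra a b : 2 * INR a + 2 <> 2 * INR b + 1.
Proof.
  intro H. assert (INR (2*a+2) = INR (2*b+1)) as H2.
  { rewrite !plus_INR, !mult_INR. simpl. lra. }
  apply INR_eq in H2. lia.
Qed.

Lemma parity (W E : nat -> Prop) :
  (forall x, E x <-> W x /\ exists k, cnt W x = 2 * INR k + 1) ->
  forall n, exists k, (cnt W n = 2 * INR k /\ cnt E n = INR k) \/
                      (cnt W n = 2 * INR k + 1 /\ cnt E n = INR k + 1).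
Proof.
  intros HE n. induction n as [|n [k IH]].
  - exists 0%nat. left. simpl. lra.
  - simpl cnt.
    destruct (excluded_middle_informative (W (S n))) as [hw|hw];
    destruct (excluded_middle_informative (E (S n))) as [he|he].
    + destruct IH as [[h1 h2]|[h1 h2]].
      * exists k. right. lra.
      * exfalso. apply HE in he. destruct he as [_ [k' hk]]. simpl in hk.
        destruct (excluded_middle_informative (W (S n))); [|contradiction].
        apply (par_contra k k'). lra.
    + destruct IH as [[h1 h2]|[h1 h2]].
      * exfalso. apply he, HE. split; [exact hw|]. exists k. simpl.
        destruct (excluded_middle_informative (W (S n))); [|contradiction]. lra.
      * exists (S k). left. rewrite S_INR. lra.
    + exfalso. apply HE in he. tauto.
    + exists k. lra.
Qed.

Lemma inv_n_lim : is_lim_seq (fun n => / INR n) 0.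
Proof.
  replace (Finite 0) with (Rbar_inv p_infty) by reflexivity.
  apply is_lim_seq_inv. apply is_lim_seq_INR. discriminate.
Qed.

Lemma n_over_n : is_lim_seq (fun n => INR n / INR n) 1.
Proof.
  apply is_lim_seq_ext_loc with (fun _ => 1).
  - exists 1%nat. intros n Hn. unfold Rdiv. rewrite Rinv_r; [reflexivity|].
    apply not_0_INR. lia.
  - apply is_lim_seq_const.
Qed.

Lemma inv_INR_nonneg n : 0 <= / INR n.
Proof.
  destruct n. simpl. rewrite Rinv_0. lra.
  apply Rlt_le, Rinv_0_lt_compat, lt_0_INR. lia.
Qed.

Lemma small_lim (d : nat -> R) : (forall n, 0 <= d n <= 1) ->
  is_lim_seq (fun n => d n / INR n) 0.
Proof.
  intro H. apply is_lim_seq_le_le with (fun _ => 0) (fun n => / INR n).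
  - intro n. specialize (H n). pose proof (inv_INR_nonneg n). unfold Rdiv.
    split; [apply Rmult_le_pos; lra|].
    rewrite <- (Rmult_1_l (/ INR n)) at 2. apply Rmult_le_compat_r; lra.
  - apply is_lim_seq_const.
  - apply inv_n_lim.
Qed.

Lemma set_eq (P Q : nat -> Prop) : (forall x, P x <-> Q x) -> P = Q.
Proof.
  intro H. apply functional_extensionality. intro x. apply propositional_extensionality. apply H.
Qed.

Lemma forward (A B : nat -> Prop) (L : R) :
  subsetN A -> subsetN B ->
  is_lim_seq (fun n => (cnt B n - cnt A n) / INR n) L ->
  forall mu, density_measure mu -> mu B - mu A = L.
Proof.
  intros HA HB Hlim mu [Hb [H1 [Hadd Hd]]].
  set (C := fun x => B x /\ ~ A x).
  set (D := fun x => A x /\ ~ B x).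
  set (I := fun x => A x /\ B x).
  set (W := fun x => (0 < x)%nat /\ ~ C x /\ ~ D x).
  set (E := fun x => W x /\ exists k, cnt W x = 2 * INR k + 1).
  assert (sC : subsetN C) by (intros x [h _]; auto).
  assert (sD : subsetN D) by (intros x [h _]; auto).
  assert (sI : subsetN I) by (intros x [h _]; auto).
  assert (sE : subsetN E) by (intros x [[h _] _]; auto).
  assert (mB : mu B = mu C + mu I).
  { rewrite <- Hadd by (auto; unfold C, I; tauto). f_equal. apply set_eq. intro x.
    unfold C, I. destruct (classic (A x)); tauto. }
  assert (mA : mu A = mu D + mu I).
  { rewrite <- Hadd by (auto; unfold D, I; tauto). f_equal. apply set_eq. intro x.
    unfold D, I. destruct (classic (B x)); tauto. }
  assert (dCE : forall x, ~ (C x /\ E x)) by (unfold E, W; tauto).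
  assert (dDE : forall x, ~ (D x /\ E x)) by (unfold E, W; tauto).
  assert (cN : forall n, INR n = cnt C n + cnt D n + cnt W n).
  { intro n. rewrite <- cnt_Nplus.
    set (CD := fun x => C x \/ D x).
    rewrite (cnt_add CD W Nplus). rewrite (cnt_add C D CD). reflexivity.
    - intros x _. unfold CD, C, D. indtac.
    - intros x hx. unfold CD, W, C, D, Nplus. indtac. }
  assert (cBA : forall n, cnt B n + cnt D n = cnt A n + cnt C n).
  { intro n. rewrite (cnt_add D I A), (cnt_add C I B). ring.
    - intros x _. unfold C, I. indtac.
    - intros x _. unfold D, I. indtac. }
  assert (cX : forall n, cnt (fun x => C x \/ E x) n = cnt C n + cnt E n).
  { intro n. apply cnt_add. intros x _. pose proof (dCE x). indtac. }
  assert (cY : forall n, cnt (fun x => D x \/ E x) n = cnt D n + cnt E n).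
  { intro n. apply cnt_add. intros x _. pose proof (dDE x). indtac. }
  assert (par : forall n, 0 <= 2 * cnt E n - cnt W n <= 1).
  { intro n. destruct (parity W E (fun x => iff_refl _) n) as [k [[h1 h2]|[h1 h2]]]; lra. }
  set (dl := fun n => 2 * cnt E n - cnt W n).
  set (s := fun n => (cnt B n - cnt A n) / INR n).
  assert (LX : is_lim_seq (fun n => cnt (fun x => C x \/ E x) n / INR n) ((1 + L) / 2)).
  { apply is_lim_seq_ext with (fun n => (INR n / INR n + s n + dl n / INR n) * / 2).
    - intro n. rewrite cX. unfold s, dl. pose proof (cN n). pose proof (cBA n).
      replace (cnt C n + cnt E n) with ((INR n + (cnt B n - cnt A n) + (2 * cnt E n - cnt W n)) / 2) by lra.
      unfold Rdiv. ring.
    - replace ((1 + L) / 2) with ((1 + L + 0) * / 2) by lra.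
      apply (is_lim_seq_scal_r _ (/ 2) (1 + L + 0)).
      apply is_lim_seq_plus'; [apply is_lim_seq_plus'; [apply n_over_n|exact Hlim]|].
      apply small_lim. intro n. apply par. }
  assert (LY : is_lim_seq (fun n => cnt (fun x => D x \/ E x) n / INR n) ((1 - L) / 2)).
  { apply is_lim_seq_ext with (fun n => (INR n / INR n - s n + dl n / INR n) * / 2).
    - intro n. rewrite cY. unfold s, dl. pose proof (cN n). pose proof (cBA n).
      replace (cnt D n + cnt E n) with ((INR n - (cnt B n - cnt A n) + (2 * cnt E n - cnt W n)) / 2) by lra.
      unfold Rdiv. ring.
    - replace ((1 - L) / 2) with ((1 - L + 0) * / 2) by lra.
      apply (is_lim_seq_scal_r _ (/ 2) (1 - L + 0)).
      apply is_lim_seq_plus'; [apply is_lim_seq_minus'; [apply n_over_n|exact Hlim]|].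
      apply small_lim. intro n. apply par. }
  assert (sX : subsetN (fun x => C x \/ E x)) by (intros x [h|h]; auto).
  assert (sY : subsetN (fun x => D x \/ E x)) by (intros x [h|h]; auto).
  pose proof (Hd _ _ sX LX) as mX. pose proof (Hd _ _ sY LY) as mY.
  rewrite Hadd in mX, mY by auto.
  lra.
Qed.

Definition ultra (U : (nat -> Prop) -> Prop) : Prop :=
  (forall N, U (fun n => (N <= n)%nat)) /\
  (forall P Q, U P -> U Q -> U (fun n => P n /\ Q n)) /\
  (forall P Q : nat -> Prop, (forall n, P n -> Q n) -> U P -> U Q) /\
  ~ U (fun _ => False) /\ (forall P, U P \/ U (fun n => ~ P n)).

Definition ulim (U : (nat -> Prop) -> Prop) (x : nat -> R) (l : R) : Prop :=
  forall e, 0 < e -> U (fun n => Rabs (x n - l) < e).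

Lemma ulim_exists U (HU : ultra U) (x : nat -> R) :
  (forall n, 0 <= x n <= 1) -> { l | ulim U x l }.
Proof.
  intro Hx. destruct HU as [HN [HI [HS [H0 HC]]]].
  set (S := fun r => U (fun n => r <= x n)).
  destruct (completeness S) as [l [Hub Hlub]].
  - exists 1. intros r hr. destruct (Rle_dec r 1) as [h|h]; [exact h|].
    exfalso. apply H0. refine (HS _ _ _ hr). intros n hn. specialize (Hx n). lra.
  - exists 0. apply (HS (fun n => (0 <= n)%nat)); [intros n _; apply Hx|apply HN].
  - exists l. intros e he.
    assert (ha : U (fun n => l - e < x n)).
    { destruct (classic (exists r, S r /\ l - e < r)) as [[r [hr hlt]]|hno].
      - refine (HS _ _ _ hr). intros n hn. lra.
      - exfalso. assert (l <= l - e); [|lra]. apply Hlub. intros r hr.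
        destruct (Rle_dec r (l - e)) as [h|h]; [exact h|].
        exfalso; apply hno; exists r; split; [exact hr|lra]. }
    assert (hb : U (fun n => x n < l + e)).
    { destruct (HC (fun n => l + e/2 <= x n)) as [h|h].
      - exfalso. assert (l + e/2 <= l) by (apply Hub; exact h). lra.
      - refine (HS _ _ _ h). intros n hn. apply Rnot_le_lt in hn. lra. }
    refine (HS _ _ _ (HI _ _ ha hb)). intros n [h1 h2]. apply Rabs_def1; lra.
Qed.

Lemma ulim_unique U (HU : ultra U) x a b : ulim U x a -> ulim U x b -> a = b.
Proof.
  intros ha hb. destruct HU as [HN [HI [HS [H0 HC]]]].
  destruct (Req_dec a b) as [h|h]; [exact h|exfalso].
  assert (he : 0 < Rabs (a - b) / 2) by (apply Rdiv_lt_0_compat; [apply Rabs_pos_lt; lra|lra]).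
  apply H0. refine (HS _ _ _ (HI _ _ (ha _ he) (hb _ he))).
  intros n [h1 h2]. apply Rabs_def2 in h1. apply Rabs_def2 in h2.
  revert h1 h2. unfold Rabs. destruct Rcase_abs; lra.
Qed.

Lemma ulim_minus U (HU : ultra U) x y a b : ulim U x a -> ulim U y b ->
  ulim U (fun n => x n - y n) (a - b).
Proof.
  intros ha hb e he. destruct HU as [HN [HI [HS [H0 HC]]]].
  assert (he2 : 0 < e / 2) by lra.
  refine (HS _ _ _ (HI _ _ (ha _ he2) (hb _ he2))).
  intros n [h1 h2]. apply Rabs_def2 in h1. apply Rabs_def2 in h2.
  apply Rabs_def1; lra.
Qed.

Lemma ulim_plus U (HU : ultra U) x y a b : ulim U x a -> ulim U y b ->
  ulim U (fun n => x n + y n) (a + b).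
Proof.
  intros ha hb e he. destruct HU as [HN [HI [HS [H0 HC]]]].
  assert (he2 : 0 < e / 2) by lra.
  refine (HS _ _ _ (HI _ _ (ha _ he2) (hb _ he2))).
  intros n [h1 h2]. apply Rabs_def2 in h1. apply Rabs_def2 in h2.
  apply Rabs_def1; lra.
Qed.

Lemma ulim_of_lim U (HU : ultra U) x (l : R) : is_lim_seq x l -> ulim U x l.
Proof.
  intros H e he. destruct HU as [HN [HI [HS [H0 HC]]]].
  apply is_lim_seq_spec in H. assert (H' : forall eps : posreal, eventually (fun n => Rabs (x n - l) < eps)) by exact H. destruct (H' (mkposreal e he)) as [N HNn].
  apply (HS _ _ HNn (HN N)).
Qed.

Lemma ulim_bounds U (HU : ultra U) x l : (forall n, 0 <= x n <= 1) -> ulim U x l ->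
  0 <= l <= 1.
Proof.
  intros Hx H. destruct HU as [HN [HI [HS [H0 HC]]]].
  split.
  - destruct (Rle_dec 0 l) as [h|h]; [exact h|exfalso]. apply H0.
    refine (HS _ _ _ (H (- l) ltac:(lra))).
    intros n hn. apply Rabs_def2 in hn. specialize (Hx n). lra.
  - destruct (Rle_dec l 1) as [h|h]; [exact h|exfalso]. apply H0.
    refine (HS _ _ _ (H (l - 1) ltac:(lra))).
    intros n hn. apply Rabs_def2 in hn. specialize (Hx n). lra.
Qed.

Lemma dens_bound X n : 0 <= cnt X n / INR n <= 1.
Proof.
  pose proof (cnt_bound X n). destruct n.
  - simpl. unfold Rdiv. rewrite Rinv_0. lra.
  - assert (0 < INR (S n)) by (apply lt_0_INR; lia).
    split; [apply Rdiv_le_0_compat; lra|].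
    unfold Rdiv. rewrite <- (Rinv_r (INR (S n))) by lra.
    apply Rmult_le_compat_r; [apply Rlt_le, Rinv_0_lt_compat; lra|lra].
Qed.

Lemma converse (A B : nat -> Prop) (L : R) :
  (forall mu : (nat -> Prop) -> R, density_measure mu -> mu B - mu A = L) ->
  is_lim_seq (fun n => (cnt B n - cnt A n) / INR n) L.
Proof.
  intro Hall. set (s := fun n => (cnt B n - cnt A n) / INR n).
  destruct (classic (is_lim_seq s L)) as [h|hno]; [exact h|exfalso].
  assert (Hex : exists eps : posreal, forall N, exists n, (N <= n)%nat /\ ~ (Rabs (s n - L) < eps)).
  { apply NNPP. intro hne. apply hno. apply is_lim_seq_spec. intro eps.
    apply NNPP. intro hev. apply hne. exists eps. intro N.
    apply NNPP. intro hn. apply hev. exists N. intros n hN.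
    apply NNPP. intro hl. apply hn. exists n. auto. }
  destruct Hex as [eps Heps].
  destruct (UF.ultra_exists _ Heps) as [U [UK [HN [HI [HS [H0 HC]]]]]].
  assert (HU : ultra U) by (repeat split; assumption).
  set (mu := fun X => proj1_sig (ulim_exists U HU (fun n => cnt X n / INR n) (dens_bound X))).
  assert (Hmu : forall X, ulim U (fun n => cnt X n / INR n) (mu X)).
  { intro X. unfold mu. destruct ulim_exists; assumption. }
  assert (Hdm : density_measure mu).
  { split; [|split; [|split]].
    - intros X _. apply (ulim_bounds U HU (fun n => cnt X n / INR n)); [apply dens_bound|apply Hmu].
    - symmetry. apply (ulim_unique U HU (fun n => cnt Nplus n / INR n)).
      + apply ulim_of_lim; [exact HU|].
        apply is_lim_seq_ext with (fun n => INR n / INR n); [intro n; rewrite cnt_Nplus; reflexivity|].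
        apply n_over_n.
      + apply Hmu.
    - intros X Y _ _ Hdis. apply (ulim_unique U HU (fun n => cnt (fun x => X x \/ Y x) n / INR n)).
      + apply Hmu.
      + assert (E : (fun n => cnt (fun x => X x \/ Y x) n / INR n) =
                    (fun n => cnt X n / INR n + cnt Y n / INR n)).
        { apply functional_extensionality. intro n.
          rewrite (cnt_add X Y). unfold Rdiv; ring.
          intros x _. pose proof (Hdis x). indtac. }
        rewrite E. apply ulim_plus; [exact HU|apply Hmu|apply Hmu].
    - intros X l _ Hl. apply (ulim_unique U HU (fun n => cnt X n / INR n)).
      + apply Hmu.
      + apply ulim_of_lim; [exact HU|exact Hl]. }
  specialize (Hall mu Hdm).
  assert (Hs : ulim U s (mu B - mu A)).
  { assert (E : s = (fun n => cnt B n / INR n - cnt A n / INR n)).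
    { apply functional_extensionality. intro n. unfold s, Rdiv. ring. }
    rewrite E. apply ulim_minus; [exact HU|apply Hmu|apply Hmu]. }
  rewrite Hall in Hs. apply H0.
  refine (HS _ _ _ (HI _ _ UK (Hs eps (cond_pos eps)))).
  intros n [h1 h2]. contradiction.
Qed.

Theorem proposition3p14 (A B : nat -> Prop) (L : R) :
  subsetN A -> subsetN B ->
  (is_lim_seq (fun n => (cnt B n - cnt A n) / INR n) L <->
   forall mu : (nat -> Prop) -> R, density_measure mu -> mu B - mu A = L).
Proof.
  intros HA HB. split.
  - apply forward; assumption.
  - apply converse.
Qed.
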